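(* Let $A$ be a unital involutive $k$-algebra. The $k$-submodule of $A$ spanned by all elements $a_0a_1a_2-a_2\overline{a_1}a_0$, with $a_0,a_1,a_2\in A$, is a two-sided ideal of $A$.
   Context: $k$ is a commutative ring. An involutive $k$-algebra is a unital associative $k$-algebra with a $k$-linear map $a\mapsto\overline a$ satisfying $\overline{\overline a}=a$, $\overline{ab}=\overline b\,\overline a$ and $\overline1=1$. *)

(* Defs.v *)
From HB Require Import structures.
From mathcomp Require Import all_boot all_order all_algebra.
Set Implicit Arguments. Unset Strict Implicit. Unset Printing Implicit Defensive.
Import GRing.Theory.
Local Open Scope ring_scope.

Definition is_involution (k : comPzRingType) (A : algType k) (bar : A -> A) :=
  [/\ forall (c : k) (x y : A), bar (c *: x + y) = c *: bar x + bar y,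
      forall x : A, bar (bar x) = x,
      forall x y : A, bar (x * y) = bar y * bar x
    & bar 1 = 1].

Definition kspan (k : comPzRingType) (A : algType k) (I : Type) (g : I -> A)
  : A -> Prop :=
  fun x => exists s : seq (k * I), x = \sum_(p <- s) p.1 *: g p.2.

Definition two_sided_ideal (A : pzRingType) (J : A -> Prop) :=
  [/\ J 0,
      forall x y, J x -> J y -> J (x + y),
      forall x, J x -> J (- x),
      forall a x, J x -> J (a * x)
    & forall a x, J x -> J (x * a)].

(* Main.v *)
Require Import Defs.
From HB Require Import structures.
From mathcomp Require Import all_boot all_order all_algebra.
Local Open Scope ring_scope.
Import GRing.Theory.

Ltac negt t := match t with - ?m => constr:(m) | _ => constr:(- t) end.

Ltac baset t := match t with - ?m => constr:(m) | _ => constr:(t) end.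

Ltac canc_move m p :=
  first [ rewrite (addrK m) | rewrite (subrK m) | rewrite addrN | rewrite addNr
        | (rewrite (addrAC _ p) || rewrite (addrC p)); canc_move m p ].

Ltac canc_last :=
  match goal with
  | |- ?S + ?t = 0 =>
    let p := negt t in let m := baset t in canc_move m p
  end.

Ltac canc :=
  apply/eqP; rewrite -subr_eq0; apply/eqP;
  rewrite ?(opprD, opprK, opprB, addrA, mulNr, mulrN, opprK);
  repeat canc_last; done.

Section S.
Variables (k : comPzRingType) (A : algType k) (bar : A -> A).
Hypothesis hbar : is_involution bar.

Definition gg (t : A * A * A) := t.1.1 * t.1.2 * t.2 - t.2 * bar t.1.2 * t.1.1.
Definition J := kspan gg.

Lemma J0 : J 0.
Proof. by exists [::]; rewrite big_nil. Qed.

Lemma JD x y : J x -> J y -> J (x + y).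
Proof. by move=> [s ->] [t ->]; exists (s ++ t); rewrite big_cat. Qed.

Lemma JZ c x : J x -> J (c *: x).
Proof.
move=> [s ->]; exists [seq (c * p.1, p.2) | p <- s].
rewrite big_map scaler_sumr; apply: eq_bigr => p _ /=; by rewrite scalerA.
Qed.

Lemma JN x : J x -> J (- x).
Proof. by move=> h; rewrite -scaleN1r; apply: JZ. Qed.

Lemma JB x y : J x -> J y -> J (x - y).
Proof. by move=> hx hy; apply: JD => //; apply: JN. Qed.

Lemma Jg t : J (gg t).
Proof. by exists [:: (1, t)]; rewrite big_cons big_nil scale1r addr0. Qed.

Lemma hbM x y : bar (x * y) = bar y * bar x.
Proof. by case: hbar. Qed.
Lemma hbb x : bar (bar x) = x.
Proof. by case: hbar. Qed.
Lemma hb1 : bar 1 = 1.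
Proof. by case: hbar. Qed.

Lemma Jl x t : J (x * gg t).
Proof.
case: t => [[a b] c].
have -> : x * gg (a, b, c) =
  - gg (1, x, c * bar b * a) + gg (1, x * bar a * b, c) - gg (1, x * b * c, a)
  + gg (1, x, b * c * a) - gg (1, x * bar a, b * c) - gg (1, x * a, bar c * bar b)
  + gg (1, x, a * bar c * bar b) + gg (1, x * a * b * c, 1).
  rewrite /gg /= !hbM ?hbb ?hb1 ?mul1r ?mulr1 ?mulrBr ?mulrBl !mulrA.
  canc.
by repeat first [apply: Jg | apply: JD | apply: JN].
Qed.

Lemma Jr x t : J (gg t * x).
Proof.
case: t => [[a b] c].
have -> : gg (a, b, c) * x =
  - gg (x, 1, a * b * c) + gg (x, bar a * b, c) - gg (1, x * b * c, a)
  + gg (1, x, b * c * a) - gg (1, x * bar a, b * c) - gg (1, x * a, bar c * bar b)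
  + gg (1, x, a * bar c * bar b) + gg (1, x * a * b * c, 1).
  rewrite /gg /= !hbM ?hbb ?hb1 ?mul1r ?mulr1 ?mulrBr ?mulrBl !mulrA.
  canc.
by repeat first [apply: Jg | apply: JD | apply: JN].
Qed.

End S.

Theorem lemma5p7 (k : comPzRingType) (A : algType k) (bar : A -> A) :
  is_involution bar ->
  two_sided_ideal
    (kspan (fun t : A * A * A => t.1.1 * t.1.2 * t.2 - t.2 * bar t.1.2 * t.1.1)).
Proof.
move=> hbar; split.
- exact: J0.
- exact: JD.
- exact: JN.
- move=> a x [s ->]; rewrite mulr_sumr.
  elim: s => [|p s IH]; first by rewrite big_nil; apply: J0.
  rewrite big_cons; apply: JD => //.
  rewrite -scalerAr; apply: JZ; exact: (@Jl k A bar hbar a p.2).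
- move=> a x [s ->]; rewrite mulr_suml.
  elim: s => [|p s IH]; first by rewrite big_nil; apply: J0.
  rewrite big_cons; apply: JD => //.
  rewrite -scalerAl; apply: JZ; exact: (@Jr k A bar hbar a p.2).
Qed.
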